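(* The set $K$ defined in the context has empty interior in $\mathbb{R}^2$.
   Context: For $k\ge 0$ and $n\ge 1$ let $t_{k,n}:=\frac{1}{2^k n}$. Define the similarities of $\mathbb{R}^2$: $U(x,y)=\left(\frac{x}{2},\frac{y+1}{2}\right)$, $D_0(x,y)=\left(\frac{x}{2},\frac{y}{2}\right)$, and $D_{k,n}(x,y)=\left(\frac{x+t_{k,n}}{2},\frac{y}{2}\right)$ for $k\ge0,n\ge1$. $K$ is the unique non-empty compact set $K\subset\mathbb{R}^2$ satisfying $K=U(K)\cup D_0(K)\cup\bigcup_{k\ge0,n\ge1}D_{k,n}(K)$. *)

(* Defs.v *)
From Stdlib Require Import Reals List.
Open Scope R_scope.

Definition pt := (R * R)%type.

Definition dist2 (p q : pt) : R :=
  sqrt ((fst p - fst q) ^ 2 + (snd p - snd q) ^ 2).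

Definition open2 (A : pt -> Prop) : Prop :=
  forall p, A p -> exists r, 0 < r /\ forall q, dist2 p q < r -> A q.

Definition compact2 (K : pt -> Prop) : Prop :=
  forall (I : Type) (O : I -> pt -> Prop),
    (forall i, open2 (O i)) ->
    (forall p, K p -> exists i, O i p) ->
    exists l : list I, forall p, K p -> exists i, In i l /\ O i p.

Definition interior2 (A : pt -> Prop) (p : pt) : Prop :=
  exists r, 0 < r /\ forall q, dist2 p q < r -> A q.

Definition t (k n : nat) : R := 1 / (2 ^ k * INR n).

Definition U (p : pt) : pt := (fst p / 2, (snd p + 1) / 2).
Definition D0 (p : pt) : pt := (fst p / 2, snd p / 2).
Definition Dkn (k n : nat) (p : pt) : pt := ((fst p + t k n) / 2, snd p / 2).

Definition IFS_fixed (K : pt -> Prop) : Prop :=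
  forall p, K p <->
    ((exists q, K q /\ p = U q) \/
     (exists q, K q /\ p = D0 q) \/
     (exists (k n : nat) q, (1 <= n)%nat /\ K q /\ p = Dkn k n q)).

(* Main.v *)
Require Import Defs.
From Stdlib Require Import Reals List Lra Lia.
Open Scope R_scope.

Lemma abs_tri a b : Rabs a <= Rabs b + Rabs (b - a).
Proof. unfold Rabs; repeat destruct Rcase_abs; lra. Qed.

Lemma dist_fst p q : Rabs (fst p - fst q) <= dist2 p q.
Proof.
  unfold dist2. rewrite <- sqrt_Rsqr_abs. apply sqrt_le_1_alt.
  unfold Rsqr; simpl; repeat rewrite Rmult_1_r; pose proof (Rle_0_sqr (snd p - snd q)); pose proof (Rle_0_sqr (fst p - fst q)); unfold Rsqr in *; lra.
Qed.

Lemma dist_snd p q : Rabs (snd p - snd q) <= dist2 p q.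
Proof.
  unfold dist2. rewrite <- sqrt_Rsqr_abs. apply sqrt_le_1_alt.
  unfold Rsqr; simpl; repeat rewrite Rmult_1_r; pose proof (Rle_0_sqr (snd p - snd q)); pose proof (Rle_0_sqr (fst p - fst q)); unfold Rsqr in *; lra.
Qed.

Definition maxl (l : list nat) : R := fold_right (fun i acc => Rmax (INR i) acc) 0 l.

Lemma maxl_ge l i : In i l -> INR i <= maxl l.
Proof.
  induction l as [|a l IH]; simpl; [tauto|].
  intros [->|H]; [apply Rmax_l|]. eapply Rle_trans; [apply IH; auto| apply Rmax_r].
Qed.

Lemma compact_bounded K : compact2 K ->
  exists M, forall p, K p -> Rabs (fst p) <= M /\ Rabs (snd p) <= M.
Proof.
  intros HC.
  destruct (HC nat (fun i p => Rabs (fst p) < INR i /\ Rabs (snd p) < INR i)) as [l Hl].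
  - intros i p [H1 H2].
    exists (Rmin (INR i - Rabs (fst p)) (INR i - Rabs (snd p))). split.
    + apply Rmin_glb_lt; lra.
    + intros q Hq.
      pose proof (dist_fst p q). pose proof (dist_snd p q).
      pose proof (Rmin_l (INR i - Rabs (fst p)) (INR i - Rabs (snd p))).
      pose proof (Rmin_r (INR i - Rabs (fst p)) (INR i - Rabs (snd p))).
      pose proof (abs_tri (fst q) (fst p)). pose proof (abs_tri (snd q) (snd p)).
      split; lra.
  - intros p _. destruct (INR_unbounded (Rabs (fst p) + Rabs (snd p))) as [n Hn].
    exists n. pose proof (Rabs_pos (fst p)); pose proof (Rabs_pos (snd p)). split; lra.
  - exists (maxl l). intros p Hp. destruct (Hl p Hp) as [i [Hi [H1 H2]]].
    pose proof (maxl_ge l i Hi). split; lra.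
Qed.

Lemma t_bounds k n : (1 <= n)%nat -> 0 < t k n <= 1.
Proof.
  intros Hn. unfold t.
  assert (1 <= 2 ^ k) by (apply pow_R1_Rle; lra).
  assert (1 <= INR n) by (apply (le_INR 1); auto).
  assert (1 <= 2 ^ k * INR n) by nra.
  split.
  - apply Rdiv_lt_0_compat; lra.
  - unfold Rdiv. rewrite Rmult_1_l. rewrite <- Rinv_1. apply Rinv_le_contravar; lra.
Qed.

Definition Kbnd (K : pt -> Prop) := forall p, K p -> 0 <= fst p <= 1 /\ 0 <= snd p <= 1.

Lemma refine K M : IFS_fixed K -> 0 <= M ->
  (forall p, K p -> Rabs (fst p) <= M /\ Rabs (snd p) <= M) ->
  forall n p, K p -> - (M * (/2)^n) <= fst p <= 1 + M * (/2)^n /\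
                     - (M * (/2)^n) <= snd p <= 1 + M * (/2)^n.
Proof.
  intros HF HM HB n. induction n as [|n IH]; intros p Hp.
  - simpl. destruct (HB p Hp) as [H1 H2].
    revert H1 H2. unfold Rabs; repeat destruct Rcase_abs; intros; lra.
  - assert (0 <= M * (/2)^n) by (apply Rmult_le_pos; auto; apply pow_le; lra).
    simpl. rewrite <- Rmult_assoc, (Rmult_comm M (/2)), Rmult_assoc.
    apply HF in Hp. destruct Hp as [[q [Hq ->]]|[[q [Hq ->]]|[k [m [q [Hm [Hq ->]]]]]]];
      destruct (IH q Hq) as [[A1 A2] [B1 B2]]; unfold U, D0, Dkn; simpl.
    + lra.
    + lra.
    + pose proof (t_bounds k m Hm). lra.
Qed.

Lemma K_bounded K : compact2 K -> IFS_fixed K -> Kbnd K.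
Proof.
  intros HC HF. destruct (compact_bounded K HC) as [M0 HM0].
  set (M := Rmax M0 0).
  assert (HM : 0 <= M) by apply Rmax_r.
  assert (HB : forall p, K p -> Rabs (fst p) <= M /\ Rabs (snd p) <= M).
  { intros p Hp. destruct (HM0 p Hp). pose proof (Rmax_l M0 0). fold M in H1. split; lra. }
  pose proof (refine K M HF HM HB) as R.
  assert (small : forall e, 0 < e -> exists n, M * (/2)^n < e).
  { intros e He. destruct (pow_lt_1_zero (/2)) with (y := e / (M+1)) as [N HN].
    - rewrite Rabs_pos_eq; lra.
    - apply Rdiv_lt_0_compat; lra.
    - exists N. specialize (HN N (le_n N)). rewrite Rabs_pos_eq in HN by (apply pow_le; lra).
      assert (0 <= (/2)^N) by (apply pow_le; lra).
      apply (Rmult_lt_compat_l (M+1)) in HN; [|lra].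
      replace ((M + 1) * (e / (M + 1))) with e in HN by (field; lra). nra. }
  intros p Hp. repeat split.
  - destruct (Rle_or_lt 0 (fst p)) as [|Hl]; auto. destruct (small (- fst p)) as [n Hn]; [lra|].
    destruct (R n p Hp). lra.
  - destruct (Rle_or_lt (fst p) 1) as [|Hl]; auto. destruct (small (fst p - 1)) as [n Hn]; [lra|].
    destruct (R n p Hp). lra.
  - destruct (Rle_or_lt 0 (snd p)) as [|Hl]; auto. destruct (small (- snd p)) as [n Hn]; [lra|].
    destruct (R n p Hp). lra.
  - destruct (Rle_or_lt (snd p) 1) as [|Hl]; auto. destruct (small (snd p - 1)) as [n Hn]; [lra|].
    destruct (R n p Hp). lra.
Qed.
Ltac spl := split; [lra|split;[lra|split;[lra|]]].
Lemma half_pow_le1 j : 0 < (/2)^j <= 1.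
Proof.
  split; [apply pow_lt; lra|]. rewrite <- (pow1 j). apply pow_incr. lra.
Qed.

Lemma half_pow_mono j j' : (j <= j')%nat -> (/2)^j' <= (/2)^j.
Proof.
  intros H. replace j' with (j + (j' - j))%nat by lia. rewrite pow_add.
  pose proof (half_pow_le1 j). pose proof (half_pow_le1 (j'-j)). nra.
Qed.

Lemma top_strip K : IFS_fixed K -> Kbnd K ->
  forall j q, K q -> 1 - (/2)^j < snd q -> fst q <= (/2)^j.
Proof.
  intros HF HB j. induction j as [|j IH]; intros q Hq Hy.
  - simpl. apply HB in Hq. lra.
  - pose proof (half_pow_le1 j). simpl in *.
    apply HF in Hq. destruct Hq as [[q' [Hq ->]]|[[q' [Hq ->]]|[k [m [q' [Hm [Hq ->]]]]]]];
      unfold U, D0, Dkn in *; simpl in *; pose proof (HB q' Hq).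
    + assert (fst q' <= (/2)^j) by (apply IH; auto; lra). lra.
    + lra.
    + lra.
Qed.

Definition isInt (c : R) := exists z, c = IZR z.

Definition Strip (m : nat) (c : R) (j : nat) (y : R) :=
  c + 1 - (/2)^j < y * 2^m < c + 1.

Definition Hole (K : pt -> Prop) m c u v := exists u' v' j, u <= u' /\ u' < v' /\ v' <= v /\
  forall q, K q -> u' < fst q < v' -> Strip m c j (snd q) -> False.

Lemma strip_mono m c j j' y : (j <= j')%nat -> Strip m c j' y -> Strip m c j y.
Proof. unfold Strip. intros H. pose proof (half_pow_mono j j' H). lra. Qed.

Lemma hole_base K : Kbnd K -> IFS_fixed K -> forall c, isInt c -> forall u v, u < v -> Hole K 0 c u v.
Proof.
  intros HB HF c [z ->] u v Huv.
  unfold Hole, Strip. simpl.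
  destruct (Z.lt_trichotomy z 0) as [Hz|[Hz|Hz]].
  - exists u, v, 0%nat. spl. intros q Hq _ Hs.
    assert (IZR z <= -1) by (apply IZR_le; lia). destruct (HB q Hq). simpl in *. lra.
  - subst z. destruct (Rle_or_lt v 0) as [Hv|Hv].
    + exists u, v, 0%nat. spl. intros q Hq Hx _. destruct (HB q Hq). lra.
    + destruct (pow_lt_1_zero (/2)) with (y := v) as [N HN]; [rewrite Rabs_pos_eq; lra|lra|].
      specialize (HN N (le_n N)). rewrite Rabs_pos_eq in HN by (apply pow_le; lra).
      exists (Rmax u ((/2)^N)), v, N.
      split; [apply Rmax_l|]. split; [apply Rmax_lub_lt; lra|]. split; [lra|].
      intros q Hq Hx Hs. pose proof (Rmax_r u ((/2)^N)).
        assert (fst q <= (/2)^N) by (apply (top_strip K HF HB); auto; lra). lra.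
  - exists u, v, 0%nat. spl. intros q Hq _ Hs.
    assert (1 <= IZR z) by (apply IZR_le; lia). destruct (HB q Hq). simpl in *. lra.
Qed.

Lemma fin_lemma K m c : (forall u v, u < v -> Hole K m c u v) ->
  forall N0 u v, u < v -> exists u' v' j, u <= u' /\ u' < v' /\ v' <= v /\
    forall N, (1 <= N <= N0)%nat -> forall q, K q ->
      2 * u' - / INR N < fst q < 2 * v' - / INR N -> Strip m c j (snd q) -> False.
Proof.
  intros IH N0. induction N0 as [|N0 IHN]; intros u v Huv.
  - exists u, v, 0%nat. spl. intros N HN. lia.
  - destruct (IHN u v Huv) as [u1 [v1 [j1 [H1 [H2 [H3 H4]]]]]].
    set (e := / INR (S N0)).
    destruct (IH (2*u1 - e) (2*v1 - e)) as [a [b [j2 [A1 [A2 [A3 A4]]]]]]; [lra|].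
    exists ((a+e)/2), ((b+e)/2), (Nat.max j1 j2). split; [lra|split;[lra|split;[lra|]]].
    intros N HN q Hq Hx Hs. destruct (Nat.eq_dec N (S N0)) as [->|HN'].
    + apply (A4 q Hq).
      * fold e in Hx. lra.
      * apply (strip_mono _ _ _ _ _ (Nat.le_max_r j1 j2) Hs).
    + apply (H4 N ltac:(lia) q Hq).
      * assert (0 < INR N) by (apply lt_0_INR; lia). lra.
      * apply (strip_mono _ _ _ _ _ (Nat.le_max_l j1 j2) Hs).
Qed.

Lemma isInt_sub c d : isInt c -> isInt d -> isInt (c - d).
Proof. intros [a ->] [b ->]. exists (a - b)%Z. now rewrite minus_IZR. Qed.

Lemma isInt_pow m : isInt (2^m).
Proof.
  induction m as [|m [z Hz]]; [exists 1%Z; reflexivity|].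
  exists (2 * z)%Z. change (2^S m) with (2 * 2^m). rewrite mult_IZR, Hz. reflexivity.
Qed.

Lemma t_inv k n : t k n = / INR (2^k * n).
Proof.
  unfold t. rewrite mult_INR, pow_INR. simpl (INR 2). unfold Rdiv. now rewrite Rmult_1_l.
Qed.

Lemma hole_step K : Kbnd K -> IFS_fixed K -> forall m,
  (forall c, isInt c -> forall u v, u < v -> Hole K m c u v) ->
  forall c, isInt c -> forall u v, u < v -> Hole K (S m) c u v.
Proof.
  intros HB HF m IH c Hc u v Huv.
  destruct (IH (c - 2^m) (isInt_sub _ _ Hc (isInt_pow m)) (2*u) (2*v)) as
    [u1 [v1 [j1 [H1 [H2 [H3 H4]]]]]]; [lra|].
  destruct (IH c Hc u1 v1 H2) as [al [be [j2 [A1 [A2 [A3 A4]]]]]].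
  set (d := (be - al) / 2).
  destruct (INR_unbounded (/ d)) as [N0 HN0].
  destruct (fin_lemma K m c (IH c Hc) N0 ((al + d)/2) (be/2)) as
    [u3 [v3 [j3 [B1 [B2 [B3 B4]]]]]]; [unfold d; lra|].
  exists u3, v3, (Nat.max j1 (Nat.max j2 j3)).
  assert (d > 0) by (unfold d; lra).
  split; [unfold d in *; lra|split;[lra|split;[lra|]]].
  intros p Hp Hx Hs.
  assert (Hm : 0 < 2^m) by (apply pow_lt; lra).
  assert (Hj1 : (j1 <= Nat.max j1 (Nat.max j2 j3))%nat) by lia.
  assert (Hj2 : (j2 <= Nat.max j1 (Nat.max j2 j3))%nat) by lia.
  assert (Hj3 : (j3 <= Nat.max j1 (Nat.max j2 j3))%nat) by lia.
  set (J := Nat.max j1 (Nat.max j2 j3)) in *.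
  unfold Strip in Hs. simpl in Hs.
  apply HF in Hp. destruct Hp as [[q [Hq ->]]|[[q [Hq ->]]|[k [n [q [Hn [Hq ->]]]]]]];
    unfold U, D0, Dkn in *; simpl in *.
  - apply (H4 q Hq); [lra|]. apply (strip_mono _ _ _ _ _ Hj1). unfold Strip.
    assert ((snd q + 1) / 2 * (2 * 2 ^ m) = snd q * 2^m + 2^m) by (field; lra). lra.
  - apply (A4 q Hq); [unfold d in *; lra|]. apply (strip_mono _ _ _ _ _ Hj2). unfold Strip.
    assert (snd q / 2 * (2 * 2 ^ m) = snd q * 2^m) by (field; lra). lra.
  - assert (Hy : Strip m c J (snd q)).
    { unfold Strip. assert (snd q / 2 * (2 * 2 ^ m) = snd q * 2^m) by (field; lra). lra. }
    pose proof (t_bounds k n Hn).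
    destruct (Rle_or_lt (t k n) d) as [Hs'|Hs'].
    + apply (A4 q Hq); [unfold d in *; lra|]. apply (strip_mono _ _ _ _ _ Hj2 Hy).
    + assert (HNpos : (1 <= 2^k * n)%nat).
      { assert (2^k <> 0)%nat by (apply Nat.pow_nonzero; lia).
        nia. }
      assert (HN : (2^k * n <= N0)%nat).
      { apply Nat.lt_le_incl. apply INR_lt.
        rewrite t_inv in Hs'.
        assert (0 < INR (2^k*n)) by (apply lt_0_INR; lia).
        assert (INR (2^k*n) < / d).
        { apply (Rmult_lt_reg_l (/ INR (2^k*n))); [apply Rinv_0_lt_compat; lra|].
          rewrite Rinv_l by lra.
          apply (Rmult_lt_reg_l d); [lra|].
          replace (d * (/ INR (2 ^ k * n) * / d)) with (/ INR (2^k*n)) by (field; lra). lra. }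
        lra. }
      apply (B4 (2^k*n)%nat ltac:(lia) q Hq).
      * rewrite <- t_inv. lra.
      * apply (strip_mono _ _ _ _ _ Hj3 Hy).
Qed.

Lemma hole_all K : Kbnd K -> IFS_fixed K -> forall m c, isInt c -> forall u v, u < v -> Hole K m c u v.
Proof.
  intros HB HF m. induction m as [|m IH].
  - apply hole_base; auto.
  - apply hole_step; auto.
Qed.

Theorem proposition2p3 :
  forall K : pt -> Prop,
    (exists p, K p) -> compact2 K -> IFS_fixed K ->
    forall p, ~ interior2 K p.
Proof.
  intros K _ HC HF p0 [r [Hr Hin]].
  pose proof (K_bounded K HC HF) as HB.
  destruct (pow_lt_1_zero (/2)) with (y := r/2) as [m Hm]; [rewrite Rabs_pos_eq; lra|lra|].
  specialize (Hm m (le_n m)). rewrite Rabs_pos_eq in Hm by (apply pow_le; lra).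
  assert (HP : 0 < 2^m) by (apply pow_lt; lra).
  assert (Hinv : (/2)^m * 2^m = 1).
  { rewrite <- Rpow_mult_distr. rewrite Rinv_l by lra. apply pow1. }
  set (x0 := fst p0). set (y0 := snd p0).
  destruct (archimed (y0 * 2^m)) as [A1 A2].
  set (c := IZR (up (y0 * 2^m)) - 1).
  assert (Hc : isInt c) by (apply isInt_sub; [exists (up (y0*2^m)); reflexivity| exists 1%Z; reflexivity]).
  destruct (hole_all K HB HF m c Hc (x0 - r/2) (x0 + r/2)) as [u [v [j [H1 [H2 [H3 H4]]]]]]; [lra|].
  pose proof (half_pow_le1 j).
  set (ys := (c + 1 - (/2)^j / 2) / 2^m).
  assert (Hys : ys * 2^m = c + 1 - (/2)^j/2) by (unfold ys; field; lra).
  apply (H4 ((u+v)/2, ys)).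
  - apply Hin. unfold dist2. cbn [fst snd]. fold x0 y0.
    assert (E1 : Rabs (x0 - (u+v)/2) < r/2) by (apply Rabs_def1; lra).
    assert (E2 : Rabs (y0 - ys) < r/2).
    { apply Rabs_def1.
      - assert ((y0 - ys) * 2^m < 1) by (unfold c in *; lra). nra.
      - assert (-1 < (y0 - ys) * 2^m) by (unfold c in *; lra). nra. }
    rewrite <- (sqrt_pow2 r) by lra. apply sqrt_lt_1_alt. split.
    + pose proof (pow2_ge_0 (x0 - (u+v)/2)). pose proof (pow2_ge_0 (y0 - ys)). lra.
    + rewrite <- (pow2_abs (x0 - (u+v)/2)), <- (pow2_abs (y0 - ys)).
      pose proof (Rabs_pos (x0 - (u+v)/2)). pose proof (Rabs_pos (y0 - ys)).
      simpl. nra.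
  - simpl. lra.
  - unfold Strip. simpl. lra.
Qed.
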